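(* Let $d\ge 3$ be odd, $n=\frac{d^2+1}{2}$, and consider the $[[d^2+1,2,d]]$ generalized bicycle code defined by $a(x)=1+x$, $b(x)=1+x^d$ in $R_n$. Let $O$ be the permutation of the $2n$ data qubits given on $\mathbb{F}_2^{2n}$ by $O\big((p(x),q(x))\big)=(x\,q(x^d),\,p(x^d))$ (the composition $\Pi_{1,0}E_dS$ of the swap $S:(p,q)\mapsto(q,p)$, the map $E_d:(p,q)\mapsto(p(x^d),q(x^d))$, and $\Pi_{1,0}:(p,q)\mapsto(xp,q)$), acting on Pauli operators by permuting tensor factors. Then applying $O$ implements a logical CNOT gate between the two logical qubits (with respect to a suitable choice of logical basis).
   Context: $R_n=\mathbb{F}_2[x]/\langle x^n-1\rangle$; the $2n$ qubits are labelled by the coefficients of pairs $(p(x),q(x))$ of elements of $R_n$. The generalized bicycle code defined by $a,b$ is the CSS code whose X-stabilizer group is generated by X-type Paulis on the vectors $x^i(a(x),b(x))$ and whose Z-stabilizer group is generated by Z-type Paulis on $x^i(b(x^{-1}),a(x^{-1}))$, $0\le i\le n-1$, $x^{-1}=x^{n-1}$. *)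

(* Defs.v *)
(* Elements of R_n = F_2[x]/<x^n-1> are represented by
   polynomials over 'F_2, always read modulo x^n - 1 (via [redp]). *)
From HB Require Import structures.
From mathcomp Require Import all_boot all_algebra.
Set Implicit Arguments. Unset Strict Implicit. Unset Printing Implicit Defensive.
Import GRing.Theory.
Local Open Scope ring_scope.

(* a vector of F_2^{2n}, i.e. a pair (p(x), q(x)) of elements of R_n *)
Definition pvec := ({poly 'F_2} * {poly 'F_2})%type.

Definition redp (n : nat) (p : {poly 'F_2}) : {poly 'F_2} := p %% ('X^n - 1).

Definition subst_pow (n k : nat) (p : {poly 'F_2}) : {poly 'F_2} :=
  redp n (p \Po 'X^k).

(* p(x) |-> p(x^{-1}), with x^{-1} = x^{n-1} *)
Definition xinv (n : nat) (p : {poly 'F_2}) : {poly 'F_2} := subst_pow n n.-1 p.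

Definition vadd (u v : pvec) : pvec := (u.1 + v.1, u.2 + v.2).
Definition vsub (u v : pvec) : pvec := (u.1 - v.1, u.2 - v.2).
Definition vscale (e : 'F_2) (u : pvec) : pvec := (e *: u.1, e *: u.2).

Definition veq (n : nat) (u v : pvec) : Prop :=
  redp n u.1 = redp n v.1 /\ redp n u.2 = redp n v.2.

Definition cyc_span (n : nat) (g : pvec) (v : pvec) : Prop :=
  exists c : 'I_n -> 'F_2,
    veq n v (\sum_(i < n) c i *: ('X^i * g.1), \sum_(i < n) c i *: ('X^i * g.2)).

Definition SX (n : nat) (a b : {poly 'F_2}) : pvec -> Prop := cyc_span n (a, b).
Definition SZ (n : nat) (a b : {poly 'F_2}) : pvec -> Prop :=
  cyc_span n (xinv n b, xinv n a).

Definition dot (n : nat) (u v : pvec) : 'F_2 :=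
  \sum_(i < n) (redp n u.1)`_i * (redp n v.1)`_i
  + \sum_(i < n) (redp n u.2)`_i * (redp n v.2)`_i.

Definition perp (n : nat) (S : pvec -> Prop) (v : pvec) : Prop :=
  forall w, S w -> dot n v w = 0.

(* (x1,x2 ; z1,z2) is a basis of logical operators of the CSS code (SX,SZ):
   logical X's commute with Z-stabilizers, logical Z's with X-stabilizers,
   they are symplectically paired, and they generate all logical operators
   modulo stabilizers. *)
Definition logical_basis (n : nat) (sx sz : pvec -> Prop) (x1 x2 z1 z2 : pvec) : Prop :=
  perp n sz x1 /\ perp n sz x2 /\ perp n sx z1 /\ perp n sx z2 /\
  dot n x1 z1 = 1 /\ dot n x1 z2 = 0 /\ dot n x2 z1 = 0 /\ dot n x2 z2 = 1 /\
  (forall v, perp n sz v -> exists e1 e2 : 'F_2,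
      sx (vsub v (vadd (vscale e1 x1) (vscale e2 x2)))) /\
  (forall v, perp n sx v -> exists e1 e2 : 'F_2,
      sz (vsub v (vadd (vscale e1 z1) (vscale e2 z2)))).

Definition Oact (n d : nat) (v : pvec) : pvec :=
  (redp n ('X * subst_pow n d v.2), subst_pow n d v.1).

(* Main.v *)
Require Import Defs.
From HB Require Import structures.
From mathcomp Require Import all_boot all_algebra.
From mathcomp Require Import ring zify.
Import GRing.Theory.
Local Open Scope ring_scope.

Set Implicit Arguments. Unset Strict Implicit. Unset Printing Implicit Defensive.

Definition mX (n : nat) : {poly 'F_2} := 'X^n - 1.
Notation io n := (in_qpoly (mX n)).

Lemma mk_monic_m n : (0 < n)%N -> mk_monic (mX n) = mX n.
Proof.
move=> n0; rewrite /mk_monic /mX -polyC1 size_XnsubC // monicXnsubC //.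
by rewrite ltnS n0.
Qed.

Lemma monic_m n : (0 < n)%N -> mX n \is monic.
Proof. by move=> n0; rewrite /mX -polyC1 monicXnsubC. Qed.

Lemma size_m n : (0 < n)%N -> size (mX n) = n.+1.
Proof. by move=> n0; rewrite /mX -polyC1 size_XnsubC. Qed.

Lemma io_val n p : (0 < n)%N -> (io n p : {poly 'F_2}) = redp n p.
Proof.
move=> n0; rewrite /in_qpoly /= /redp mk_monic_m //.
by rewrite Pdiv.IdomainMonic.modpE ?monic_m.
Qed.

Lemma ioE n p q : (0 < n)%N -> (redp n p = redp n q) <-> io n p = io n q.
Proof.
move=> n0; rewrite -!io_val //; split; last by move->.
by move=> h; apply: val_inj.
Qed.

Lemma io_redp n p : (0 < n)%N -> io n (redp n p) = io n p.
Proof. by move=> n0; apply/ioE => //; rewrite /redp modp_id. Qed.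

Lemma io_m n : (0 < n)%N -> io n (mX n) = 0.
Proof.
move=> n0; rewrite -(rmorph0 (io n)); apply/ioE => //.
by rewrite /redp modpp mod0p.
Qed.

Lemma ioXn n : (0 < n)%N -> io n 'X^n = 1.
Proof.
move=> n0; have := io_m n0; rewrite /mX rmorphB rmorph1 /=.
by move/eqP; rewrite subr_eq0 => /eqP.
Qed.

Lemma ioX_mod n e : (0 < n)%N -> io n 'X^e = io n 'X^(e %% n).
Proof.
move=> n0; rewrite {1}(divn_eq e n) exprD mulnC exprM rmorphM rmorphXn /=.
by rewrite ioXn // expr1n mul1r.
Qed.

Lemma char2 (R : nzRingType) : 2%N \in [pchar R] -> forall x : R, - x = x.
Proof. by move=> h x; rewrite oppr_pchar2. Qed.

Lemma pcharQ n : 2%N \in [pchar {poly %/ mX n}].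
Proof. by rewrite pchar_qpoly (pchar_Fp (isT : prime 2)). Qed.

Lemma oppQ n (x : {poly %/ mX n}) : - x = x.
Proof. exact: char2 (pcharQ n) x. Qed.

Lemma oppP (x : {poly 'F_2}) : - x = x.
Proof. apply: char2; rewrite pchar_poly. exact: (pchar_Fp (isT : prime 2)). Qed.

Lemma io_eq0 n p : (0 < n)%N -> io n p = 0 -> exists g, p = g * mX n.
Proof.
move=> n0 h; exists (p %/ mX n).
have : redp n p = redp n 0 by apply/ioE => //; rewrite rmorph0.
rewrite /redp mod0p => h0.
by rewrite {1}(divp_eq p (mX n)) h0 addr0.
Qed.

Lemma Xn_comp k n : ('X^n : {poly 'F_2}) \Po 'X^k = 'X^(k * n).
Proof.
elim: n => [|n IH]; first by rewrite expr0 muln0 expr0 comp_polyC.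
by rewrite exprS comp_polyM comp_polyX IH mulnS exprD.
Qed.

Lemma io_comp n k p q : (0 < n)%N -> io n p = io n q ->
  io n (p \Po 'X^k) = io n (q \Po 'X^k).
Proof.
move=> n0 h; apply/eqP; rewrite -subr_eq0 -rmorphB -comp_polyB.
have [g ->] : exists g, p - q = g * mX n.
  by apply: io_eq0 => //; rewrite rmorphB /= h subrr.
rewrite comp_polyM rmorphM /mX comp_polyB Xn_comp -polyC1 comp_polyC polyC1.
by rewrite rmorphB /= ioX_mod // modnMl expr0 rmorph1 subrr mulr0.
Qed.

Lemma redp_size n (p : {poly 'F_2}) : (0 < n)%N -> (size (redp n p) <= n)%N.
Proof.
move=> n0; rewrite -ltnS -(size_m n0) /redp ltn_modp -size_poly_gt0 size_m //.
Qed.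

Lemma redp_small n (p : {poly 'F_2}) : (0 < n)%N -> (size p <= n)%N -> redp n p = p.
Proof. by move=> n0 h; rewrite /redp modp_small // size_m. Qed.

Lemma redp_id n p : redp n (redp n p) = redp n p.
Proof. by rewrite /redp modp_id. Qed.

Lemma redpX n e : (0 < n)%N -> redp n 'X^e = 'X^(e %% n).
Proof.
move=> n0; rewrite -[RHS](redp_small n0); last by rewrite size_polyXn ltn_mod.
by apply/ioE => //; rewrite ioX_mod.
Qed.

Lemma redp_sum n I (r : seq I) (P : pred I) (F : I -> {poly 'F_2}) :
  redp n (\sum_(i <- r | P i) F i) = \sum_(i <- r | P i) redp n (F i).
Proof.
exact: (big_morph (fun p => p %% mX n) (fun p q => modpD (mX n) p q) (mod0p _)).
Qed.

Lemma redpZ n c p : redp n (c *: p) = c *: redp n p.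
Proof. by rewrite /redp modpZl. Qed.

Lemma redpD n p q : redp n (p + q) = redp n p + redp n q.
Proof. by rewrite /redp modpD. Qed.

Lemma poly_expand n (p : {poly 'F_2}) : (size p <= n)%N ->
  p = \sum_(i < n) p`_i *: 'X^i.
Proof.
move=> h; rewrite -poly_def; apply/polyP => i; rewrite coef_poly.
case: ltnP => // hi; rewrite nth_default //; exact: leq_trans h hi.
Qed.

Lemma modn_key n i j : (i < n)%N -> (j < n)%N ->
  (0 == (i + n.-1 * j) %% n)%N = (i == j).
Proof.
move=> hi hj; have n0 : (0 < n)%N := leq_ltn_trans (leq0n i) hi.
apply/idP/idP; last first.
  move/eqP=> ->; rewrite -{1}(mul1n j) -mulnDl add1n prednK //.
  by rewrite mulnC modnMl.
move/eqP=> h.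
have e : ((i + n.-1 * j + j) %% n = i %% n)%N.
  rewrite -addnA -{2}(mul1n j) -mulnDl addn1 prednK //.
  by rewrite addnC mulnC modnMDl.
move: e; rewrite -modnDml -h add0n !modn_small // => ->; by [].
Qed.

Lemma dot1 n p q : (0 < n)%N ->
  \sum_(i < n) (redp n p)`_i * (redp n q)`_i = (redp n (p * xinv n q))`_0.
Proof.
move=> n0.
have -> : redp n (p * xinv n q) = redp n (redp n p * (redp n q \Po 'X^(n.-1))).
  apply/ioE => //; rewrite /xinv /subst_pow !rmorphM /= !io_redp //.
  by congr (_ * _); apply: io_comp => //; rewrite io_redp.
set P := redp n p; set Q := redp n q.
have sP : (size P <= n)%N by apply: redp_size.
have sQ : (size Q <= n)%N by apply: redp_size.
rewrite [in RHS](poly_expand sP) [in RHS](poly_expand sQ).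
rewrite (big_morph (fun p => p \Po 'X^(n.-1)) (fun p q => comp_polyD p q _) (comp_poly0 _)).
rewrite mulr_suml redp_sum coef_sum; apply: eq_bigr => i _.
rewrite mulr_sumr redp_sum coef_sum.
rewrite (bigD1 i) //= big1 ?addr0.
  rewrite comp_polyZ Xn_comp -scalerAr -scalerAl -exprD !redpZ redpX //.
  by rewrite !coefZ coefXn (modn_key (ltn_ord i) (ltn_ord i)) eqxx mulr1 mulrC.
move=> j ji; have ij : (nat_of_ord i == j) = false by rewrite eq_sym; apply: negbTE.
rewrite comp_polyZ Xn_comp -scalerAr -scalerAl -exprD !redpZ redpX //.
by rewrite !coefZ coefXn (modn_key (ltn_ord i) (ltn_ord j)) ij mulr0 mulr0.
Qed.

Lemma dotE n u w : (0 < n)%N ->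
  dot n u w = (redp n (u.1 * xinv n w.1 + u.2 * xinv n w.2))`_0.
Proof. by move=> n0; rewrite /dot !dot1 // redpD coefD. Qed.

Lemma coef_extract n r k : (k < n)%N ->
  (redp n r)`_k = (redp n (xinv n 'X^k * r))`_0.
Proof.
move=> kn; have n0 : (0 < n)%N := leq_ltn_trans (leq0n k) kn.
rewrite mulrC -dot1 // redpX // modn_small //.
rewrite (bigD1 (Ordinal kn)) //= coefXn eqxx mulr1 big1 ?addr0 // => j hj.
rewrite coefXn.
have -> : (nat_of_ord j == k) = false.
  by apply: negbTE; apply: contra hj => /eqP h; apply/eqP; apply: val_inj.
by rewrite mulr0.
Qed.

Lemma io_sp n k p : (0 < n)%N -> io n (subst_pow n k p) = io n (p \Po 'X^k).
Proof. by move=> n0; rewrite /subst_pow io_redp. Qed.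

Lemma io_sp_compat n k p q : (0 < n)%N -> io n p = io n q ->
  io n (subst_pow n k p) = io n (subst_pow n k q).
Proof. by move=> n0 h; rewrite !io_sp //; apply: io_comp. Qed.

Lemma io_spM n k p q : (0 < n)%N ->
  io n (subst_pow n k (p * q)) = io n (subst_pow n k p) * io n (subst_pow n k q).
Proof. by move=> n0; rewrite !io_sp // comp_polyM rmorphM. Qed.

Lemma io_spD n k p q : (0 < n)%N ->
  io n (subst_pow n k (p + q)) = io n (subst_pow n k p) + io n (subst_pow n k q).
Proof. by move=> n0; rewrite !io_sp // comp_polyD rmorphD. Qed.

Lemma io_spX n k e : (0 < n)%N ->
  io n (subst_pow n k 'X^e) = io n 'X ^+ (k * e).
Proof. by move=> n0; rewrite io_sp // Xn_comp rmorphXn. Qed.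

Lemma io_sp1 n k : (0 < n)%N -> io n (subst_pow n k 1) = 1.
Proof. by move=> n0; rewrite io_sp // -polyC1 comp_polyC polyC1 rmorph1. Qed.

Lemma io_sp0 n k : (0 < n)%N -> io n (subst_pow n k 0) = 0.
Proof. by move=> n0; rewrite io_sp // comp_poly0 rmorph0. Qed.

Lemma sp0 n k : subst_pow n k 0 = 0.
Proof. by rewrite /subst_pow comp_poly0 /redp mod0p. Qed.

Lemma m_horner n : (mX n).[1] = 0.
Proof. by rewrite /mX hornerD hornerN hornerXn expr1n hornerC subrr. Qed.

Lemma io_horner n p q : (0 < n)%N -> io n p = io n q -> p.[1] = q.[1].
Proof.
move=> n0 h; apply/eqP; rewrite -subr_eq0 -hornerN -hornerD.
have [g ->] : exists g, p - q = g * mX n.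
  by apply: io_eq0 => //; rewrite rmorphB /= h subrr.
by rewrite hornerM m_horner mulr0.
Qed.

Lemma redp_horner n p : (0 < n)%N -> (redp n p).[1] = p.[1].
Proof. by move=> n0; apply: (@io_horner n) => //; rewrite io_redp. Qed.

Lemma sp_horner n k p : (0 < n)%N -> (subst_pow n k p).[1] = p.[1].
Proof.
by move=> n0; rewrite /subst_pow redp_horner // horner_comp hornerXn expr1n.
Qed.

Lemma xpow_add n (e t : nat) : (0 < n)%N ->
  io n 'X ^+ (e + n * t) = io n 'X ^+ e.
Proof.
move=> n0; have h : io n 'X ^+ n = 1 by rewrite -rmorphXn; exact: ioXn.
by rewrite exprD exprM h expr1n mulr1.
Qed.

Lemma xpow_pred n : (0 < n)%N -> io n 'X * io n 'X ^+ n.-1 = 1.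
Proof.
move=> n0; have h : io n 'X ^+ n = 1 by rewrite -rmorphXn; exact: ioXn.
by rewrite -exprS prednK.
Qed.

Lemma cyc_spanE n g v : (0 < n)%N ->
  cyc_span n g v <-> exists f, io n v.1 = io n f * io n g.1 /\ io n v.2 = io n f * io n g.2.
Proof.
move=> n0; split.
  case=> c [h1 h2]; exists (\sum_(i < n) c i *: 'X^i).
  move/ioE: h1 => /(_ n0) ->; move/ioE: h2 => /(_ n0) ->.
  by rewrite -!rmorphM !mulr_suml; split; congr (io n _); apply: eq_bigr => i _; rewrite scalerAl.
case=> f [h1 h2]; exists (fun i => (redp n f)`_i); split; apply/ioE => //.
  rewrite h1 -io_redp // -rmorphM; congr (io n _).
  rewrite [in LHS](poly_expand (redp_size f n0)) mulr_suml.
  by apply: eq_bigr => i _; rewrite scalerAl.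
rewrite h2 -io_redp // -rmorphM; congr (io n _).
rewrite [in LHS](poly_expand (redp_size f n0)) mulr_suml.
by apply: eq_bigr => i _; rewrite scalerAl.
Qed.

Lemma redp_eq0 n p : (0 < n)%N -> io n p = 0 -> redp n p = 0.
Proof.
move=> n0 h; have : redp n p = redp n 0 by apply/ioE => //; rewrite rmorph0.
by rewrite /redp mod0p.
Qed.

Lemma perp_cyc n g v : (0 < n)%N ->
  perp n (cyc_span n g) v <->
  io n (v.1 * xinv n g.1 + v.2 * xinv n g.2) = 0.
Proof.
move=> n0.
set R := v.1 * xinv n g.1 + v.2 * xinv n g.2.
have key : forall w f, io n w.1 = io n f * io n g.1 -> io n w.2 = io n f * io n g.2 ->
    dot n v w = (redp n (xinv n f * R))`_0.
  move=> w f h1 h2; rewrite dotE //; apply: (f_equal (fun p : {poly _} => p`_0)); apply/ioE => //.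
  have e1 : io n (xinv n w.1) = io n (xinv n f) * io n (xinv n g.1).
    by rewrite /xinv -io_spM //; apply: io_sp_compat => //; rewrite rmorphM.
  have e2 : io n (xinv n w.2) = io n (xinv n f) * io n (xinv n g.2).
    by rewrite /xinv -io_spM //; apply: io_sp_compat => //; rewrite rmorphM.
  rewrite /R !rmorphD !rmorphM /= e1 e2; ring.
split.
  move=> hp; have : redp n R = 0.
    apply/polyP => k; rewrite coef0.
    case: (ltnP k n) => kn; last first.
      by rewrite nth_default //; apply: leq_trans (redp_size R n0) kn.
    rewrite coef_extract //.
    rewrite -(key ('X^k * g.1, 'X^k * g.2) ('X^k)) ?rmorphM //.
    apply: hp; apply/cyc_spanE => //; exists 'X^k; by rewrite !rmorphM.
  by move=> h; rewrite -io_redp // h rmorph0.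
move=> hR w /(cyc_spanE _ _ n0) [f [h1 h2]]; rewrite (key w f h1 h2).
rewrite (_ : redp n (xinv n f * R) = 0) ?coef0 //.
by apply: redp_eq0 => //; rewrite rmorphM /= hR mulr0.
Qed.

Definition J (n : nat) : {poly 'F_2} := \poly_(i < n) 1.

Lemma J_expand n : J n = \sum_(i < n) 'X^i.
Proof. by rewrite /J poly_def; apply: eq_bigr => i _; rewrite scale1r. Qed.

Lemma mJ n : mX n = ('X - 1) * J n.
Proof. by rewrite /mX subrX1 J_expand. Qed.

Lemma F2_11 : (1 + 1 : 'F_2) = 0.
Proof. by apply/eqP. Qed.

Lemma natF2 k : (k%:R : 'F_2) = (odd k)%:R.
Proof.
rewrite -{1}(odd_double_half k) natrD -muln2 natrM.
by rewrite (pchar_Fp_0 (isT : prime 2)) mulr0 addr0.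
Qed.

Lemma J_horner n : odd n -> (J n).[1] = 1.
Proof.
move=> on; rewrite J_expand horner_sum.
under eq_bigr do rewrite hornerXn expr1n.
by rewrite sumr_const card_ord natF2 on.
Qed.

Lemma size_J n : (size (J n) <= n)%N.
Proof. exact: size_poly. Qed.

Lemma coefJ0 n : (0 < n)%N -> (J n)`_0 = 1.
Proof. by move=> n0; rewrite coef_poly n0. Qed.

Lemma a_eq : (1 + 'X : {poly 'F_2}) = 'X - 1.
Proof. by rewrite addrC (oppP 1). Qed.

Lemma ann n r : (0 < n)%N -> odd n -> io n (('X - 1) * r) = 0 ->
  io n r = r.[1] *: io n (J n).
Proof.
move=> n0 on h.
have [g hg] := io_eq0 n0 h.
have X1 : ('X - 1 : {poly 'F_2}) != 0.
  by rewrite -polyC1 polyXsubC_eq0.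
have rg : r = g * J n.
  by apply: (mulfI X1); rewrite hg mJ; ring.
have r1 : r.[1] = g.[1] by rewrite rg hornerM J_horner // mulr1.
have [h' hh] : exists h', g - g.[1]%:P = h' * ('X - 1).
  have : root (g - g.[1]%:P) 1 by rewrite /root hornerD hornerN hornerC subrr.
  by move/factor_theorem => [q ->]; exists q; rewrite polyC1.
apply/eqP; rewrite -subr_eq0 r1 -linearZ /= -mul_polyC -rmorphB /=.
rewrite rg -mulrBl hh -mulrA -mJ rmorphM /= io_m // mulr0 //.
Qed.

Lemma stab_gen n g1 g2 w (v : pvec) : (0 < n)%N -> odd n ->
  io n g1 * io n w = io n ('X - 1) -> g2.[1] = 0 ->
  io n (v.1 * g2 + v.2 * g1) = 0 -> v.1.[1] = 0 -> v.2.[1] = 0 ->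
  exists f, io n v.1 = io n f * io n g1 /\ io n v.2 = io n f * io n g2.
Proof.
move=> n0 on hw hg2 E p1 p2.
have [h hp] : exists h, v.1 = h * ('X - 1).
  have : root v.1 1 by rewrite /root p1.
  by move/factor_theorem => [q ->]; exists q; rewrite polyC1.
have HV1 : io n v.1 = io n h * (io n g1 * io n w) by rewrite hp rmorphM /= hw.
exists (h * w); split; first by rewrite HV1 rmorphM /=; ring.
set r := v.2 - h * w * g2.
have hr : io n (('X - 1) * r) = 0.
  rewrite rmorphM /= -hw /r rmorphB !rmorphM /=.
  move: E; rewrite rmorphD !rmorphM /= => E.
  set V1 := io n v.1 in E HV1 *; set V2 := io n v.2 in E *.
  set G1 := io n g1 in E HV1 *; set G2 := io n g2 in E *.
  set W := io n w in HV1 *; set H := io n h in HV1 *.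
  have -> : G1 * W * (V2 - H * W * G2) = W * (V2 * G1) + - (W * (H * (G1 * W) * G2)) by ring.
  rewrite oppQ -HV1.
  have -> : W * (V2 * G1) + W * (V1 * G2) = W * (V1 * G2 + V2 * G1) by ring.
  by rewrite E mulr0.
have := ann n0 on hr.
have -> : r.[1] = 0 by rewrite /r hornerD hornerN !hornerM hg2 p2 mulr0 subrr.
rewrite scale0r => /eqP; rewrite /r rmorphB subr_eq0 => /eqP ->.
by rewrite rmorphM.
Qed.

Lemma io_sp_1pX n k e : (0 < n)%N ->
  io n (subst_pow n k (1 + 'X^e)) = io n (1 + 'X^(k * e)).
Proof. by move=> n0; rewrite io_spD // io_sp1 // io_spX // rmorphD rmorph1 rmorphXn. Qed.

Lemma io_sp_a n k : (0 < n)%N ->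
  io n (subst_pow n k (1 + 'X)) = io n (1 + 'X^k).
Proof. by move=> n0; rewrite -{1}(expr1 'X) io_sp_1pX // muln1. Qed.

Lemma io_1pX n e : io n (1 + 'X^e) = 1 + io n 'X ^+ e.
Proof. by rewrite rmorphD rmorph1 rmorphXn. Qed.

Lemma horner_1pX e : ((1 + 'X^e : {poly 'F_2})).[1] = 0.
Proof. by rewrite hornerD hornerC hornerXn expr1n; apply/eqP. Qed.

Section Code.
End Code.

Lemma exps n d : (1 < n)%N -> (d * d = n.-1 + n * 1)%N ->
  [/\ (n.-1 * n.-1 = 1 + n * (n - 2))%N,
      (d * (n.-1 * d) = 1 + n * (n - 2 + n.-1))%N &
      (n.-1 * (n.-1 * d) = d + n * ((n - 2) * d))%N].
Proof.
move=> n1 dd; have h1 : (n.-1 * n.-1 = 1 + n * (n - 2))%N by nia.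
split => //.
- have -> : (d * (n.-1 * d) = n.-1 * (d * d))%N by ring.
  rewrite dd mulnDr h1; nia.
- rewrite mulnA h1; nia.
Qed.

Lemma addQQ n (t : {poly %/ mX n}) : t + t = 0.
Proof. by rewrite -{1}(oppQ t) addNr. Qed.

Definition Lgen n (B A : {poly %/ mX n}) (v : pvec) := io n v.1 * B + io n v.2 * A.

Lemma Lgen_sub n B A u w : Lgen B A (vsub u w) = Lgen B A u - Lgen B A w :> {poly %/ mX n}.
Proof. rewrite /Lgen /vsub /= !rmorphB /=; ring. Qed.

Lemma Lgen_add n B A u w : Lgen B A (vadd u w) = Lgen B A u + Lgen B A w :> {poly %/ mX n}.
Proof. rewrite /Lgen /vadd /= !rmorphD /=; ring. Qed.

Lemma Lgen_scale n B A e u : Lgen B A (vscale e u) = e *: Lgen B A u :> {poly %/ mX n}.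
Proof. by rewrite /Lgen /vscale /= !linearZ /= scalerDr -!scalerAl. Qed.

Notation xx n := (io n 'X).
Definition LX n d v := Lgen (1 + xx n ^+ d) (1 + xx n) v = 0.
Definition LZ n d v := Lgen (1 + xx n ^+ n.-1) (1 + xx n ^+ (n.-1 * d)) v = 0.

Lemma qa n : io n (1 + 'X) = 1 + xx n.
Proof. by rewrite rmorphD rmorph1. Qed.

Lemma qabar n : (0 < n)%N -> io n (xinv n (1 + 'X)) = 1 + xx n ^+ n.-1.
Proof. by move=> n0; rewrite /xinv io_sp_a // io_1pX. Qed.

Lemma qbbar n d : (0 < n)%N -> io n (xinv n (1 + 'X^d)) = 1 + xx n ^+ (n.-1 * d).
Proof. by move=> n0; rewrite /xinv io_sp_1pX // io_1pX. Qed.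

Lemma qxxa n : (1 < n)%N -> io n (xinv n (xinv n (1 + 'X))) = 1 + xx n.
Proof.
move=> n1; have n0 : (0 < n)%N by apply: ltnW.
rewrite /xinv (@io_sp_compat _ _ _ (1 + 'X^(n.-1))) ?io_sp_a //.
rewrite io_sp_1pX // io_1pX.
have -> : (n.-1 * n.-1 = 1 + n * (n - 2))%N by nia.
by rewrite xpow_add // expr1.
Qed.

Lemma qxxb n d : (1 < n)%N -> io n (xinv n (xinv n (1 + 'X^d))) = 1 + xx n ^+ d.
Proof.
move=> n1; have n0 : (0 < n)%N by apply: ltnW.
rewrite /xinv (@io_sp_compat _ _ _ (1 + 'X^(n.-1 * d))) ?io_sp_1pX //.
rewrite io_1pX.
have -> : (n.-1 * (n.-1 * d) = d + n * ((n - 2) * d))%N.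
  rewrite mulnA (_ : n.-1 * n.-1 = 1 + n * (n - 2))%N; [nia|nia].
by rewrite xpow_add.
Qed.

Lemma perpZ_iff n d v : (1 < n)%N ->
  perp n (SZ n (1 + 'X) (1 + 'X^d)) v <-> LX n d v.
Proof.
move=> n1; have n0 : (0 < n)%N by apply: ltnW.
rewrite /SZ perp_cyc //= /LX /Lgen rmorphD !rmorphM /= qxxa // qxxb //.
Qed.

Lemma perpX_iff n d v : (1 < n)%N ->
  perp n (SX n (1 + 'X) (1 + 'X^d)) v <-> LZ n d v.
Proof.
move=> n1; have n0 : (0 < n)%N by apply: ltnW.
by rewrite /SX perp_cyc //= /LZ /Lgen rmorphD !rmorphM /= qabar // qbbar.
Qed.

Lemma SX_iff n d v : (1 < n)%N -> odd n ->
  SX n (1 + 'X) (1 + 'X^d) v <-> [/\ LX n d v, v.1.[1] = 0 & v.2.[1] = 0].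
Proof.
move=> n1 on; have n0 : (0 < n)%N by apply: ltnW.
rewrite /SX cyc_spanE //=; split.
  case=> f [h1 h2]; split.
  - by rewrite /LX /Lgen h1 h2 io_1pX qa (_ : _ * _ * _ = io n f * (1 + xx n) * (1 + xx n ^+ d)) ?addQQ //; ring.
  - by rewrite (@io_horner n v.1 (f * (1 + 'X))) ?rmorphM // hornerM -[in (1 + _)](expr1 'X) horner_1pX mulr0.
  - by rewrite (@io_horner n v.2 (f * (1 + 'X^d))) ?rmorphM // hornerM horner_1pX mulr0.
case=> hL p1 p2.
apply: (@stab_gen n (1 + 'X) (1 + 'X^d) 1 v) => //.
- by rewrite rmorph1 mulr1 a_eq.
- exact: horner_1pX.
- by move: hL; rewrite /LX /Lgen rmorphD !rmorphM /= io_1pX qa.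
Qed.

Lemma SZ_iff n d v : (1 < n)%N -> odd n ->
  SZ n (1 + 'X) (1 + 'X^d) v <-> [/\ LZ n d v, v.1.[1] = 0 & v.2.[1] = 0].
Proof.
move=> n1 on; have n0 : (0 < n)%N by apply: ltnW.
rewrite /SZ cyc_spanE //=; split.
  case=> f [h1 h2]; split.
  - rewrite /LZ /Lgen h1 h2 qabar // qbbar //.
    rewrite (_ : _ * _ * _ = io n f * (1 + xx n ^+ (n.-1 * d)) * (1 + xx n ^+ n.-1)) ?addQQ //; ring.
  - rewrite (@io_horner n v.1 (f * xinv n (1 + 'X^d))) ?rmorphM //.
    by rewrite hornerM /xinv sp_horner // horner_1pX mulr0.
  - rewrite (@io_horner n v.2 (f * xinv n (1 + 'X))) ?rmorphM //.
    by rewrite hornerM /xinv sp_horner // -[in (1 + _)](expr1 'X) horner_1pX mulr0.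
case=> hL p1 p2.
have H1 : io n (xinv n (1 + 'X)) * io n 'X = io n ('X - 1).
  rewrite qabar // rmorphB rmorph1 /= mulrDl mul1r mulrC xpow_pred // addrC.
  by rewrite addrC oppQ.
have H2 : (xinv n (1 + 'X^d)).[1] = 0 by rewrite /xinv sp_horner // horner_1pX.
have H3 : io n ((v.2, v.1).1 * xinv n (1 + 'X^d) + (v.2, v.1).2 * xinv n (1 + 'X)) = 0.
  by move: hL; rewrite /LZ /Lgen rmorphD !rmorphM /= qabar // qbbar // addrC.
have [f [h1 h2]] := @stab_gen n _ _ _ (v.2, v.1) n0 on H1 H2 H3 p2 p1.
by exists f; split.
Qed.


Lemma LX_O n d v : (1 < n)%N -> (d * d = n.-1 + n * 1)%N ->
  LX n d v -> LX n d (Oact n d v).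
Proof.
move=> n1 dd H; have n0 : (0 < n)%N by apply: ltnW.
have hv : io n (v.1 * (1 + 'X^d) + v.2 * (1 + 'X)) = io n 0.
  by move: H; rewrite /LX /Lgen rmorphD !rmorphM /= io_1pX qa rmorph0.
have := io_sp_compat d n0 hv.
rewrite io_sp0 // io_spD // !io_spM // io_sp_1pX // io_sp_a // !io_1pX dd xpow_add // => hs.
rewrite /LX /Lgen /Oact /= io_redp // rmorphM /=.
set S1 := io n (subst_pow n d v.1) in hs *.
set S2 := io n (subst_pow n d v.2) in hs *.
have xy := xpow_pred n0.
transitivity (xx n * (S1 * (1 + xx n ^+ n.-1) + S2 * (1 + xx n ^+ d))); last by rewrite hs mulr0.
rewrite (_ : xx n * (S1 * (1 + xx n ^+ n.-1) + S2 * (1 + xx n ^+ d)) =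
   xx n * S2 * (1 + xx n ^+ d) + S1 * (xx n + xx n * xx n ^+ n.-1)); last by ring.
by rewrite xy (addrC (xx n)).
Qed.

Lemma LZ_O n d v : (1 < n)%N -> (d * d = n.-1 + n * 1)%N ->
  LZ n d v -> LZ n d (Oact n d v).
Proof.
move=> n1 dd H; have n0 : (0 < n)%N by apply: ltnW.
have [_ e3 _] := exps n1 dd.
have hv : io n (v.1 * xinv n (1 + 'X) + v.2 * xinv n (1 + 'X^d)) = io n 0.
  by move: H; rewrite /LZ /Lgen rmorphD !rmorphM /= qabar // qbbar // rmorph0.
have := io_sp_compat d n0 hv.
rewrite io_sp0 // io_spD // !io_spM //.
rewrite (@io_sp_compat n d (xinv n (1 + 'X)) (1 + 'X^(n.-1))); last by rewrite /xinv io_sp_a.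
rewrite (@io_sp_compat n d (xinv n (1 + 'X^d)) (1 + 'X^(n.-1 * d))); last by rewrite /xinv io_sp_1pX.
rewrite !io_sp_1pX // !io_1pX e3 xpow_add // expr1 (mulnC d) => hs.
rewrite /LZ /Lgen /Oact /= io_redp // rmorphM /=.
set S1 := io n (subst_pow n d v.1) in hs *.
set S2 := io n (subst_pow n d v.2) in hs *.
have xy := xpow_pred n0.
rewrite -hs.
rewrite (_ : xx n * S2 * (1 + xx n ^+ n.-1) = S2 * (xx n + xx n * xx n ^+ n.-1)); last by ring.
by rewrite xy addrC (addrC (xx n)).
all: by [].
Qed.

Lemma Oact_p1 n d v : (0 < n)%N -> (Oact n d v).1.[1] = v.2.[1].
Proof. by move=> n0; rewrite /Oact /= redp_horner // hornerM hornerX mul1r sp_horner. Qed.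

Lemma Oact_p2 n d v : (0 < n)%N -> (Oact n d v).2.[1] = v.1.[1].
Proof. by move=> n0; rewrite /Oact /= sp_horner. Qed.

Lemma dot_sym n u w : dot n u w = dot n w u.
Proof.
by rewrite /dot; congr (_ + _); apply: eq_bigr => i _; rewrite mulrC.
Qed.

Lemma xinvJ n : (1 < n)%N -> odd n -> io n (xinv n (J n)) = io n (J n).
Proof.
move=> n1 on; have n0 : (0 < n)%N by apply: ltnW.
have h0 : io n (xinv n (mX n)) = 0.
  rewrite /xinv -(@io_sp0 n n.-1 n0); apply: io_sp_compat => //.
  by rewrite io_m // rmorph0.
have h0' : io n (subst_pow n n.-1 (('X - 1) * J n)) = 0 by rewrite -mJ.
move: h0'; rewrite io_spM // -a_eq io_sp_a // io_1pX => {}h0.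
have : io n (('X - 1) * subst_pow n n.-1 (J n)) = 0.
  rewrite rmorphM rmorphB rmorph1 /=.
  transitivity (xx n * ((1 + xx n ^+ n.-1) * io n (subst_pow n n.-1 (J n)))); last by rewrite h0 mulr0.
  by rewrite mulrA mulrDr mulr1 xpow_pred // (oppQ 1).
move/(ann n0 on); rewrite sp_horner // J_horner // scale1r; exact.
Qed.

Arguments Oact : simpl never.
Arguments xinv : simpl never.

Unset Implicit Arguments.

Theorem theorem6 (d : nat) :
  (3 <= d)%N -> odd d ->
  let n := ((d ^ 2).+1)./2 in
  let a : {poly 'F_2} := 1 + 'X in
  let b : {poly 'F_2} := 1 + 'X^d in
  (forall v, SX n a b v -> SX n a b (Oact n d v)) /\
  (forall v, SZ n a b v -> SZ n a b (Oact n d v)) /\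
  exists x1 x2 z1 z2 : pvec,
    logical_basis n (SX n a b) (SZ n a b) x1 x2 z1 z2 /\
    SX n a b (vsub (Oact n d x1) (vadd x1 x2)) /\
    SX n a b (vsub (Oact n d x2) x2) /\
    SZ n a b (vsub (Oact n d z1) z1) /\
    SZ n a b (vsub (Oact n d z2) (vadd z1 z2)).
Proof.
move=> d3 dodd n a b.
have [k dk] : exists k, d = (2 * k + 1)%N.
  exists d./2; rewrite -{1}(odd_double_half d) dodd -muln2 /=; lia.
have nk : n = (2 * k * k + 2 * k + 1)%N.
  rewrite /n dk.
  have -> : ((2 * k + 1) ^ 2).+1 = (2 * k * k + 2 * k + 1).*2.
    rewrite -muln2 expnS expn1; nia.
  by rewrite doubleK.
have n1 : (1 < n)%N by rewrite nk; nia.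
have on : odd n by rewrite nk addn1 /= -mulnA -mulnDr oddM.
have dd : (d * d = n.-1 + n * 1)%N by rewrite nk dk addn1 /=; nia.
have n0 : (0 < n)%N by apply: ltnW.
rewrite /a /b.
set c : {poly 'F_2} := \sum_(i < d) 'X^i.
have cb : (1 + 'X^d : {poly 'F_2}) = (1 + 'X) * c.
  by rewrite a_eq /c -subrX1 addrC (oppP 1).
have c1 : c.[1] = 1.
  rewrite /c horner_sum; under eq_bigr do rewrite hornerXn expr1n.
  by rewrite sumr_const card_ord natF2 dodd.
have J1 := J_horner on.
have xc1 : (xinv n c).[1] = 1 by rewrite /xinv sp_horner.
have JX : io n (J n) * (1 + xx n) = 0.
  by rewrite -qa -rmorphM a_eq mulrC -mJ; exact: io_m.
have JY : io n (J n) * (1 + xx n ^+ n.-1) = 0.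
  transitivity (io n (J n) * (1 + xx n) * xx n ^+ n.-1); last by rewrite JX mul0r.
  by rewrite -mulrA mulrDl mul1r (xpow_pred n0) addrC.
have LX1 : LX n d (0, J n) by rewrite /LX /Lgen /= rmorph0 mul0r add0r.
have LX2 : LX n d (1, c).
  by rewrite /LX /Lgen /= rmorph1 mul1r -io_1pX cb rmorphM /= qa mulrC addQQ.
have LZ1 : LZ n d (xinv n c, 1).
  rewrite /LZ /Lgen /= rmorph1 mul1r -qabar // -qbbar // cb /xinv io_spM //.
  by rewrite mulrC addQQ.
have LZ2 : LZ n d (J n, 0) by rewrite /LZ /Lgen /= rmorph0 mul0r addr0.
split.
  move=> v /(SX_iff _ _ n1 on) [hL p1 p2]; apply/(SX_iff _ _ n1 on); split.
  - exact: LX_O.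
  - by rewrite Oact_p1.
  - by rewrite Oact_p2.
split.
  move=> v /(SZ_iff _ _ n1 on) [hL p1 p2]; apply/(SZ_iff _ _ n1 on); split.
  - exact: LZ_O.
  - by rewrite Oact_p1.
  - by rewrite Oact_p2.
exists (0, J n), (1, c), (xinv n c, 1), (J n, 0).
have redJ : redp n (J n) = J n by apply: redp_small => //; exact: size_J.
have xinv1 : io n (xinv n 1) = 1 by rewrite /xinv io_sp1.
have xinv0 : xinv n 0 = 0 by rewrite /xinv sp0.
split; [split; [|split; [|split; [|split; [|split; [|split; [|split; [|split; [|split]]]]]]]]|split; [|split; [|split]]].
- by apply/perpZ_iff.
- by apply/perpZ_iff.
- by apply/perpX_iff.
- by apply/perpX_iff.
- rewrite dotE //= (_ : redp n _ = J n) ?coefJ0 //.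
  rewrite -[RHS]redJ; apply/ioE => //.
  by rewrite rmorphD !rmorphM /= xinv1 rmorph0 !mul0r add0r mulr1.
- by rewrite dotE //= xinv0 mul0r mulr0 addr0 /redp mod0p coef0.
- rewrite dot_sym dotE //=.
  rewrite (_ : redp n _ = 0) ?coef0 //; apply: redp_eq0 => //.
  by rewrite rmorphD !rmorphM /= xinv1 rmorph1 mulr1 mul1r addQQ.
- rewrite dotE //= xinv0 mulr0 addr0 (_ : redp n _ = J n) ?coefJ0 //.
  rewrite -[RHS]redJ; apply/ioE => //.
  by rewrite rmorphM /= rmorph1 mul1r xinvJ.
- move=> v /(perpZ_iff _ _ n1) hL.
  exists (v.2.[1] - v.1.[1]), v.1.[1]; apply/(SX_iff _ _ n1 on); split.
  + by rewrite /LX Lgen_sub Lgen_add !Lgen_scale hL LX1 LX2 !scaler0 addr0 subrr.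
  + by rewrite /= hornerD hornerN hornerD !hornerZ hornerC hornerC; ring.
  + by rewrite /= hornerD hornerN hornerD !hornerZ J1 c1; ring.
- move=> v /(perpX_iff _ _ n1) hL.
  exists v.2.[1], (v.1.[1] - v.2.[1]); apply/(SZ_iff _ _ n1 on); split.
  + by rewrite /LZ Lgen_sub Lgen_add !Lgen_scale hL LZ1 LZ2 !scaler0 addr0 subrr.
  + by rewrite /= hornerD hornerN hornerD !hornerZ J1 xc1; ring.
  + by rewrite /= hornerD hornerN hornerD !hornerZ hornerC hornerC; ring.
- apply/(SX_iff _ _ n1 on); split.
  + by rewrite /LX Lgen_sub Lgen_add (LX_O n1 dd LX1) LX1 LX2 addr0 subrr.
  + by rewrite /= hornerD hornerN redp_horner // hornerM hornerX mul1r sp_horner // J1 hornerD hornerC hornerC; apply/eqP.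
  + by rewrite /= hornerD hornerN sp_horner // hornerD hornerC J1 c1; apply/eqP.
- apply/(SX_iff _ _ n1 on); split.
  + by rewrite /LX Lgen_sub (LX_O n1 dd LX2) LX2 subrr.
  + by rewrite /= hornerD hornerN redp_horner // hornerM hornerX mul1r sp_horner // c1 hornerC; apply/eqP.
  + by rewrite /= hornerD hornerN sp_horner // c1 hornerC; apply/eqP.
- apply/(SZ_iff _ _ n1 on); split.
  + by rewrite /LZ Lgen_sub (LZ_O n1 dd LZ1) LZ1 subrr.
  + by rewrite /= hornerD hornerN redp_horner // hornerM hornerX mul1r sp_horner // xc1 hornerC; apply/eqP.
  + by rewrite /= hornerD hornerN sp_horner // xc1 hornerC; apply/eqP.
- apply/(SZ_iff _ _ n1 on); split.
  + by rewrite /LZ Lgen_sub Lgen_add (LZ_O n1 dd LZ2) LZ1 LZ2 addr0 subrr.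
  + by rewrite /= hornerD hornerN redp_horner // hornerM hornerX mul1r sp_horner // hornerD hornerC xc1 J1; apply/eqP.
  + by rewrite /= hornerD hornerN sp_horner // hornerD hornerC J1 horner0; apply/eqP.
Qed.
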